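(* Let $G$ be a finite group. Then there exist $d\ge1$ and $w\in F_d$ with $w(G)=[G,G]$. Moreover, if $G$ is a finite $p$-group, then there exist $d'\ge1$ and $w'\in F_{d'}$ with $w'(G)=\Phi(G)$.
   Context: $F_d$ is the free group on $d$ letters; for $w\in F_d$, $w(G)$ is the image of the word map $G^d\to G$ given by evaluating $w$. $\Phi(G)$ is the Frattini subgroup. *)

(* Defs.v *)
From HB Require Import structures.
From mathcomp Require Import all_boot all_fingroup all_solvable.
Set Implicit Arguments. Unset Strict Implicit. Unset Printing Implicit Defensive.

(* Words in d letters x_0,...,x_{d-1}: group terms.  Every element of the free
   group F_d is represented by such a term, and any two terms representing
   the same element of F_d induce the same word map on every group, so
   quantifying over terms is the same as quantifying over F_d. *)
Inductive gword (d : nat) : Type :=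
  | GVar of 'I_d
  | GOne
  | GMul of gword d & gword d
  | GInv of gword d.

Section WordMap.
Variable gT : finGroupType.
Local Open Scope group_scope.

Fixpoint gword_eval (d : nat) (w : gword d) (g : 'I_d -> gT) : gT :=
  match w with
  | GVar i => g i
  | GOne => 1
  | GMul u v => gword_eval u g * gword_eval v g
  | GInv u => (gword_eval u g)^-1
  end.

Definition word_image (d : nat) (w : gword d) (G : {set gT}) : {set gT} :=
  [set x | [exists g : {ffun 'I_d -> gT},
              [forall i, g i \in G] && (x == gword_eval w g)]].
End WordMap.

(* Main.v *)
Require Import Defs.
From mathcomp Require Import all_boot all_fingroup all_solvable.
Local Open Scope group_scope.
Set Implicit Arguments. Unset Strict Implicit.

Fixpoint rename d1 d2 (f : 'I_d1 -> 'I_d2) (w : gword d1) : gword d2 :=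
  match w with
  | GVar i => GVar (f i)
  | GOne => GOne _
  | GMul u v => GMul (rename f u) (rename f v)
  | GInv u => GInv (rename f u)
  end.

Section S.
Variable gT : finGroupType.
Variable G : {group gT}.

Lemma eval_rename d1 d2 (f : 'I_d1 -> 'I_d2) (w : gword d1) (g : 'I_d2 -> gT) :
  gword_eval (rename f w) g = gword_eval w (fun i => g (f i)).
Proof. by elim: w => /= [i|//|u IHu v IHv|u IHu]; rewrite ?IHu ?IHv. Qed.

Lemma eval_ext d (w : gword d) (g h : 'I_d -> gT) :
  (forall i, g i = h i) -> gword_eval w g = gword_eval w h.
Proof. by move=> e; elim: w => /= [i|//|u IHu v IHv|u IHu]; rewrite ?IHu ?IHv ?e. Qed.

Definition wcat d1 d2 (w1 : gword d1) (w2 : gword d2) : gword (d1 + d2) :=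
  GMul (rename (@lshift d1 d2) w1) (rename (@rshift d1 d2) w2).

Lemma image_cat d1 d2 (w1 : gword d1) (w2 : gword d2) :
  word_image (wcat w1 w2) G = word_image w1 G * word_image w2 G.
Proof.
apply/setP => x; apply/idP/idP.
  rewrite inE => /existsP[g /andP[/forallP gG /eqP ->]].
  rewrite /= !eval_rename; apply: mem_mulg; rewrite inE; apply/existsP.
    exists [ffun i => g (lshift d2 i)]; rewrite -(eval_ext w1 (g := [ffun i => g (lshift d2 i)])) ?eqxx ?andbT; last by move=> i; rewrite ffunE.
    by apply/forallP => i; rewrite ffunE.
  exists [ffun i => g (rshift d1 i)]; rewrite -(eval_ext w2 (g := [ffun i => g (rshift d1 i)])) ?eqxx ?andbT; last by move=> i; rewrite ffunE.
  by apply/forallP => i; rewrite ffunE.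
case/mulsgP => y z; rewrite !inE => /existsP[g1 /andP[/forallP g1G /eqP ->]].
move=> /existsP[g2 /andP[/forallP g2G /eqP ->]] ->.
apply/existsP; exists [ffun i => match split i with inl j => g1 j | inr k => g2 k end].
apply/andP; split.
  apply/forallP => i; rewrite ffunE; case: (split i) => j; [exact: g1G | exact: g2G].
rewrite /= !eval_rename; apply/eqP; congr (_ * _); apply: eval_ext => i; rewrite ffunE.
  by rewrite (unsplitK (inl i)).
by rewrite (unsplitK (inr i)).
Qed.

Lemma image_one : word_image (@GOne 1%N) G = 1.
Proof.
apply/setP => x; rewrite inE [RHS]inE; apply/existsP/eqP => [[g /andP[_ /eqP ->]]|->] //.
exists [ffun=> 1]; rewrite eqxx andbT; apply/forallP => i; by rewrite ffunE group1.
Qed.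

Lemma image_pow d (w : gword d) n :
  exists d' (w' : gword d'), (0 < d')%N /\ word_image w' G = word_image w G ^+ n.
Proof.
elim: n => [|n [d' [w' [d'0 IH]]]]; first by exists 1%N, (@GOne 1%N); rewrite image_one.
exists (d + d')%N, (wcat w w'); split; first by rewrite addn_gt0 d'0 orbT.
by rewrite image_cat IH expgS.
Qed.

Lemma image_gen d (w : gword d) : 1 \in word_image w G ->
  exists d' (w' : gword d'), (0 < d')%N /\ word_image w' G = <<word_image w G>>.
Proof.
move=> w1; have [n ->] := gen_expgs (word_image w G).
have -> : 1 |: word_image w G = word_image w G by apply/setUidPr; rewrite sub1set.
exact: image_pow.
Qed.

Definition wcomm : gword 2 :=
  GMul (GInv (GVar ord0)) (GMul (GMul (GInv (GVar ord_max)) (GVar ord0)) (GVar ord_max)).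

Lemma image_comm : word_image wcomm G = commg_set G G.
Proof.
apply/setP => x; rewrite inE; apply/existsP/idP.
  case=> g /andP[/forallP gG /eqP ->]; apply/imset2P; exists (g ord0) (g ord_max) => //.
  by rewrite /commg /conjg /= !mulgA.
case/imset2P => y z yG zG ->.
exists [ffun i => if i == ord0 then y else z]; apply/andP; split.
  by apply/forallP => i; rewrite ffunE; case: ifP.
by rewrite /= !ffunE /= /commg /conjg !mulgA.
Qed.

Fixpoint wp (n : nat) : gword 1 :=
  match n with 0 => @GOne 1%N | n.+1 => GMul (GVar ord0) (wp n) end.

Lemma eval_wp n (g : 'I_1 -> gT) : gword_eval (wp n) g = g ord0 ^+ n.
Proof. by elim: n => //= n ->; rewrite expgS. Qed.

Lemma image_wp n : word_image (wp n) G = [set x ^+ n | x in G].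
Proof.
apply/setP => x; rewrite inE; apply/existsP/idP.
  case=> g /andP[/forallP gG /eqP ->]; rewrite eval_wp; exact: imset_f.
case/imsetP => y yG ->; exists [ffun=> y]; rewrite eval_wp ffunE eqxx andbT.
by apply/forallP => i; rewrite ffunE.
Qed.
End S.

Theorem lemma5p1 (gT : finGroupType) (G : {group gT}) :
  (exists (d : nat) (w : gword d), (0 < d)%N /\ word_image w G = [~: G, G])
  /\ (forall p : nat, prime p -> p.-group G ->
        exists (d' : nat) (w' : gword d'), (0 < d')%N /\ word_image w' G = 'Phi(G)).
Proof.
have hc : exists d (w : gword d), (0 < d)%N /\ word_image w G = [~: G, G].
  rewrite /commutator -image_comm; apply: image_gen.
  by rewrite image_comm; apply/imset2P; exists 1 1; rewrite ?group1 ?comm1g.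
split=> // p pr pG.
have [d [w [d0 ew]]] := hc.
have [d2 [w2 [_ ew2]]] : exists d (w : gword d), (0 < d)%N /\
    word_image w G = 'Mho^1(G).
  rewrite (MhoE 1 pG) expn1 -image_wp; apply: image_gen.
  by rewrite image_wp; apply/imsetP; exists 1; rewrite ?group1 ?expg1n.
exists (d + d2)%N, (wcat w w2); split; first by rewrite addn_gt0 d0.
rewrite image_cat ew ew2 (Phi_joing pG) derg1 norm_joinEl //.
apply: subset_trans (normal_norm (Mho_normal 1 G)).
exact: (der_sub 1 G).
Qed.
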